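(* Consider the noisy HK system (S1) under assumption (A1), with $r_{\min}<1$. Then for every initial state, the system asymptotically reaches quasi-synchronization almost surely if and only if $\eta\le r_{\min}/2$. Moreover, if $\eta\le r_{\min}/2$ and $\tau$ denotes the minimal $t$ with $d_{\mathcal V}(t)\le2\eta$, then $d_{\mathcal V}(t)\le 2\eta$ for all $t\ge\tau$, and there exist constants $\lambda_2\in(0,1)$, $\Lambda_2>0$ depending only on $n,\eta,\underline\rho$ and $r_1,\dots,r_n$ such that $P(\tau>s)\le(1-\lambda_2)^{\lfloor s/\Lambda_2\rfloor}$ for all $s\ge0$.
   Context: Fix an integer $n\ge3$, agent set $\mathcal V=\{1,\dots,n\}$, confidence thresholds $r_i\in(0,1]$ ($i\in\mathcal V$), $r_{\min}=\min_i r_i$, $r_{\max}=\max_i r_i$, and a noise amplitude $\eta>0$. Opinions $x_i(t)\in[0,1]$, $x(t)=(x_1(t),\dots,x_n(t))$, $t=0,1,2,\dots$, with arbitrary initial state $x(0)\in[0,1]^n$. The neighbor set is $\mathcal N_i(t)=\{j\in\mathcal V:|x_j(t)-x_i(t)|\le r_i\}$ (it contains $i$), and $\Pi_{[0,1]}(y)=\min\{1,\max\{0,y\}\}$. Let $d_{\mathcal V}(t)=\max_{i,j\in\mathcal V}|x_i(t)-x_j(t)|$ and $\overline d_{\mathcal V}=\limsup_{t\to\infty}d_{\mathcal V}(t)$. The system asymptotically reaches quasi-synchronization if $\overline d_{\mathcal V}\le r_{\min}$. System (S1): for all $i\in\mathcal V$, $t\ge0$, $x_i(t+1)=\Pi_{[0,1]}\big(|\mathcal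 N_i(t)|^{-1}\sum_{j\in\mathcal N_i(t)}x_j(t)+\xi_i(t)\big)$, with random noises $\xi_i(t)\in[-\eta,\eta]$. Assumption (A1): there is a constant $\underline\rho>0$ such that for every $t\ge0$, given any states $x(0),\dots,x(t)\in[0,1]^n$, $P\big(\bigcap_{i=1}^n\{\xi_i(t)\in[a_i,b_i]\}\,\big|\,x(0),\dots,x(t)\big)\ge\underline\rho\prod_{i=1}^n(b_i-a_i)$ for all reals $-\eta\le a_i<b_i\le\eta$. *)

(* Defs.v *)
From HB Require Import structures.
From mathcomp Require Import all_boot all_order all_algebra.
From mathcomp Require Import all_classical all_reals all_analysis.
Set Implicit Arguments. Unset Strict Implicit. Unset Printing Implicit Defensive.
Import Order.TTheory GRing.Theory Num.Theory.
Import numFieldNormedType.Exports.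
Local Open Scope ring_scope.

Section HK.
Variables (R : realType) (n : nat).

(* r_min = min_i r_i ; the neutral element 1 is harmless since r_i <= 1 and n >= 3 *)
Definition rmin (r : 'I_n -> R) : R := \big[Order.min/1]_(i < n) r i.

Definition proj01 (y : R) : R := Order.min 1 (Order.max 0 y).

Definition nbr (r : 'I_n -> R) (x : 'I_n -> R) (i : 'I_n) : pred 'I_n :=
  fun j => `|x j - x i| <= r i.

Definition nbr_avg (r : 'I_n -> R) (x : 'I_n -> R) (i : 'I_n) : R :=
  (\sum_(j | nbr r x i j) x j) / (#|[pred j | nbr r x i j]|)%:R.

Definition diam (x : 'I_n -> R) : R :=
  \big[Order.max/0]_(i < n) \big[Order.max/0]_(j < n) `|x i - x j|.

Definition in01 (x : 'I_n -> R) : Prop := forall i, 0 <= x i <= 1.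

Fixpoint traj {T : Type} (r : 'I_n -> R) (xi : 'I_n -> nat -> T -> R)
    (x0 : 'I_n -> R) (t : nat) (w : T) : 'I_n -> R :=
  match t with
  | 0 => x0
  | t'.+1 => let x := traj r xi x0 t' w in
             fun i => proj01 (nbr_avg r x i + xi i t' w)
  end.

Definition quasi_sync (r : 'I_n -> R) (x : nat -> 'I_n -> R) : Prop :=
  limn_sup (fun t => diam (x t)) <= rmin r.

Local Open Scope classical_set_scope.

(* generators of sigma(x(0),...,x(t)) : preimages of Borel sets under the
   coordinates x_i(s), i in V, s <= t *)
Definition past_gen {T : Type} (r : 'I_n -> R) (xi : 'I_n -> nat -> T -> R)
    (x0 : 'I_n -> R) (t : nat) : set (set T) :=
  [set A | exists i : 'I_n, exists s : nat, (s <= t)%N /\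
     exists C : set R, measurable C /\ A = (fun w => traj r xi x0 s w i) @^-1` C].

(* Assumption (A1) for the trajectory started at x0, stated in the standard way
   for conditional probabilities: for every event B of sigma(x(0),...,x(t)),
   P({xi(t) in box} /\ B) >= rho * vol(box) * P(B). *)
Definition A1 {d} {T : measurableType d} (P : probability T R) (r : 'I_n -> R)
    (eta rho : R) (xi : 'I_n -> nat -> T -> R) (x0 : 'I_n -> R) : Prop :=
  forall (t : nat) (a b : 'I_n -> R),
    (forall i, - eta <= a i /\ a i < b i /\ b i <= eta) ->
    forall B : set T, <<s past_gen r xi x0 t >> B ->
      ((rho * \prod_(i < n) (b i - a i))%:E * P B <=
        P ([set w | forall i, (a i <= xi i t w <= b i)%R] `&` B))%E.

Definition noise_ok {d} {T : measurableType d} (P : probability T R)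
    (r : 'I_n -> R) (eta rho : R) (xi : ('I_n -> R) -> 'I_n -> nat -> T -> R) : Prop :=
  forall x0, in01 x0 ->
    (forall i t, measurable_fun setT (xi x0 i t)) /\
    (forall i t w, - eta <= xi x0 i t w <= eta) /\
    A1 P r eta rho (xi x0) x0.

End HK.

(* Main.v *)
Require Import Defs.
From HB Require Import structures.
From mathcomp Require Import all_boot all_order all_algebra.
From mathcomp Require Import all_classical all_reals all_analysis.
From mathcomp Require Import lra measurable_realfun zify.
Import Order.TTheory GRing.Theory Num.Theory.
Import numFieldNormedType.Exports.
Local Open Scope ring_scope.
Local Open Scope classical_set_scope.

Section Det.
Variables (R : realType) (n : nat).
Implicit Types (x : 'I_n -> R) (r : 'I_n -> R).

Lemma proj01_ge0 (y : R) : 0 <= proj01 y.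
Proof. by rewrite /proj01 le_min ler01 le_max lexx. Qed.

Lemma proj01_le1 (y : R) : proj01 y <= 1.
Proof. by rewrite /proj01 ge_min lexx. Qed.

Lemma proj01_le (y c : R) : 0 <= c -> y <= c -> proj01 y <= c.
Proof. by move=> c0 yc; rewrite /proj01 ge_min ge_max c0 yc orbT. Qed.

Lemma proj01_ge (y c : R) : c <= 1 -> c <= y -> c <= proj01 y.
Proof. by move=> c1 yc; rewrite /proj01 le_min le_max c1 yc orbT. Qed.

Lemma proj01_cases (y : R) :
  (y <= 0 /\ proj01 y = 0) \/ ((0 <= y <= 1) /\ proj01 y = y) \/ (1 <= y /\ proj01 y = 1).
Proof.
have p0 : 0 <= proj01 y := proj01_ge0 y.
have p1 : proj01 y <= 1 := proj01_le1 y.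
have [y0|y0] := leP y 0.
  left; split => //; apply/le_anti; rewrite p0 andbT; exact: proj01_le.
have [y1|y1] := leP y 1.
  right; left; rewrite (ltW y0) /=; split => //.
  by apply/le_anti/andP; split; [apply: proj01_le|apply: proj01_ge] => //; exact: ltW.
right; right; split; first exact: ltW.
by apply/le_anti/andP; split => //; apply: proj01_ge => //; exact: ltW.
Qed.

Lemma proj01_lip (y y' : R) : `|proj01 y - proj01 y'| <= `|y - y'|.
Proof.
have h1 := ler_norm (y - y'); have h2 : y' - y <= `|y - y'| by rewrite distrC ler_norm.
rewrite ler_norml.
case: (proj01_cases y) => [[a ->]|[[/andP[a b] ->]|[a ->]]];
case: (proj01_cases y') => [[c ->]|[[/andP[c e] ->]|[c ->]]];
apply/andP; split; lra.
Qed.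

Lemma bigmax_seq_ge (I : eqType) (s : seq I) (F : I -> R) (x0 : R) i :
  i \in s -> F i <= \big[Order.max/x0]_(j <- s) F j.
Proof.
elim: s => [//|a s IH]; rewrite inE big_cons => /orP[/eqP->|/IH h].
  by rewrite le_max lexx.
by rewrite le_max h orbT.
Qed.

Lemma bigmax_seq_le (I : eqType) (s : seq I) (F : I -> R) (x0 c : R) :
  x0 <= c -> (forall j, j \in s -> F j <= c) -> \big[Order.max/x0]_(j <- s) F j <= c.
Proof.
move=> x0c; elim: s => [|a s IH] h; first by rewrite big_nil.
rewrite big_cons ge_max (h a (mem_head _ _)) /=; apply: IH => j js; apply: h.
by rewrite inE js orbT.
Qed.

Lemma bigmin_seq_le (I : eqType) (s : seq I) (F : I -> R) (x0 : R) i :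
  i \in s -> \big[Order.min/x0]_(j <- s) F j <= F i.
Proof.
elim: s => [//|a s IH]; rewrite inE big_cons => /orP[/eqP->|/IH h].
  by rewrite ge_min lexx.
by rewrite ge_min h orbT.
Qed.

Lemma diam_ge x i j : `|x i - x j| <= diam x.
Proof.
have h1 := @bigmax_seq_ge _ _ (fun j => `|x i - x j|) 0 j (mem_index_enum j).
have h2 := @bigmax_seq_ge _ _ (fun i => \big[Order.max/0]_(j < n) `|x i - x j|) 0 i (mem_index_enum i).
exact: le_trans h1 h2.
Qed.

Lemma diam_le x c : 0 <= c -> (forall i j, `|x i - x j| <= c) -> diam x <= c.
Proof.
move=> c0 h; rewrite /diam; apply: bigmax_seq_le => // i _.
by apply: bigmax_seq_le => // j _.
Qed.

Lemma rmin_le r i : rmin r <= r i.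
Proof. exact: (@bigmin_seq_le _ _ r 1 i (mem_index_enum i)). Qed.

Lemma nbr_self r x i : 0 <= r i -> nbr r x i i.
Proof. by move=> h; rewrite /nbr subrr normr0. Qed.

Lemma avg_bounds r x i lo hi : 0 <= r i -> (forall j, lo <= x j <= hi) ->
  lo <= nbr_avg r x i <= hi.
Proof.
move=> ri h; rewrite /nbr_avg.
set S := [pred j | nbr r x i j].
have c0 : (0 < #|S|)%N by apply/card_gt0P; exists i; rewrite inE nbr_self.
have c0' : 0 < (#|S|)%:R :> R by rewrite ltr0n.
have Elo : \sum_(j | nbr r x i j) lo = lo *+ #|S| := sumr_const S lo.
have Ehi : \sum_(j | nbr r x i j) hi = hi *+ #|S| := sumr_const S hi.
apply/andP; split.
  rewrite ler_pdivlMr // (mulr_natr lo) -Elo; apply: ler_sum => j _.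
  by case/andP: (h j).
rewrite ler_pdivrMr // (mulr_natr hi) -Ehi; apply: ler_sum => j _.
by case/andP: (h j).
Qed.

Lemma traj_in01 {T : Type} r (xi : 'I_n -> nat -> T -> R) x0 t w :
  in01 x0 -> in01 (traj r xi x0 t w).
Proof.
move=> h; elim: t => [//|t IH] i /=.
by rewrite proj01_ge0 proj01_le1.
Qed.

Lemma step_diam r x (z : 'I_n -> R) eta : 0 <= eta ->
  diam x <= 2 * eta -> 2 * eta <= rmin r -> (forall i, - eta <= z i <= eta) ->
  diam (fun i => proj01 (nbr_avg r x i + z i)) <= 2 * eta.
Proof.
move=> e0 dx er hz.
have allnb i : nbr r x i = xpredT.
  apply/funext => j; apply/idP; rewrite /nbr.
  apply: le_trans (diam_ge x j i) _; apply: le_trans dx _.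
  by apply: le_trans er _; exact: rmin_le.
have avgE i k : nbr_avg r x i = nbr_avg r x k by rewrite /nbr_avg allnb allnb.
apply: diam_le; first lra.
move=> i j; rewrite (avgE j i); apply: le_trans (proj01_lip _ _) _.
have := hz i; have := hz j; move=> /andP[a b] /andP[c d].
rewrite ler_norml; apply/andP; split; lra.
Qed.

End Det.

Section Meas.
Variables (R : realType) (n : nat).

Lemma fin_cap_meas d (T : measurableType d) (F : 'I_n -> set T) :
  (forall j, measurable (F j)) -> measurable [set w | forall j, F j w].
Proof.
move=> mF.
suff h : forall s : seq 'I_n, measurable [set w | forall j, j \in s -> F j w].
  have -> : [set w | forall j, F j w] = [set w | forall j, j \in index_enum 'I_n -> F j w].
    by apply/seteqP; split => w /= hw j // ; apply: hw; rewrite mem_index_enum.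
  exact: h.
elim => [|a s IH].
  have -> : [set w | forall j, j \in [::] -> F j w] = setT by apply/seteqP; split.
  exact: measurableT.
have -> : [set w | forall j, j \in a :: s -> F j w] =
   F a `&` [set w | forall j, j \in s -> F j w].
  apply/seteqP; split => w /=.
    by move=> hw; split; [apply: hw; rewrite mem_head|move=> j js; apply: hw; rewrite inE js orbT].
  by move=> [Fa hs] j; rewrite inE => /orP[/eqP->//|/hs].
exact: measurableI.
Qed.

Lemma avg_formula r (x : 'I_n -> R) i :
  nbr_avg r x i = (\sum_(j < n) (if nbr r x i j then x j else 0)) *
    \sum_(k < n.+1) (if (\sum_(j < n) (if nbr r x i j then (1:R) else 0)) == k%:R
                     then (k%:R)^-1 else 0).
Proof.
rewrite /nbr_avg; congr (_ * _); first exact: big_mkcond.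
set S := [pred j | nbr r x i j].
have cE : \sum_(j < n) (if nbr r x i j then 1 else 0) = (#|S|)%:R :> R.
  by rewrite -sum1_card natr_sum [RHS]big_mkcond; apply: eq_bigr => j _; rewrite inE.
rewrite cE.
have cn : (#|S| < n.+1)%N by rewrite ltnS (leq_trans (max_card _)) // card_ord.
rewrite (bigD1 (Ordinal cn)) //= eqxx big1 ?addr0 // => k kne.
case: ifP => // /eqP/eqP; rewrite eqr_nat => /eqP ek.
by move: kne; rewrite -(inj_eq val_inj) /= ek eqxx.
Qed.

Lemma proj01_meas : measurable_fun setT (@proj01 R).
Proof.
apply: measurable_minr; first exact: measurable_cst.
apply: measurable_maxr; first exact: measurable_cst.
exact: measurable_id.
Qed.

Lemma traj_meas d (T : measurableType d) r (xi : 'I_n -> nat -> T -> R) x0 :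
  (forall i t, measurable_fun setT (xi i t)) ->
  forall t i, measurable_fun setT (fun w => traj r xi x0 t w i).
Proof.
move=> mxi; elim => [|t IH] i; first exact: measurable_cst.
have mnb : forall j, measurable_fun setT (fun w => nbr r (traj r xi x0 t w) i j).
  move=> j; apply: measurable_fun_ler; last exact: measurable_cst.
  apply: measurableT_comp; first exact: normr_measurable.
  by apply: measurable_funB; [exact: IH|exact: IH].
apply: (measurableT_comp proj01_meas).
apply: measurable_funD; last exact: mxi.
rewrite (_ : (fun w => _) = (fun w => (\sum_(j < n) (if nbr r (traj r xi x0 t w) i j then traj r xi x0 t w j else 0)) *
    \sum_(k < n.+1) (if (\sum_(j < n) (if nbr r (traj r xi x0 t w) i j then (1:R) else 0)) == k%:R
                     then (k%:R)^-1 else 0))); last first.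
  by apply/funext => w; rewrite avg_formula.
apply: measurable_funM.
  apply: measurable_sum => j.
  by apply: measurable_fun_ifT; [exact: mnb|exact: IH|exact: measurable_cst].
apply: measurable_sum => k.
apply: measurable_fun_ifT; [|exact: measurable_cst|exact: measurable_cst].
apply: measurable_fun_eqr; last exact: measurable_cst.
apply: measurable_sum => j.
by apply: measurable_fun_ifT; [exact: mnb|exact: measurable_cst|exact: measurable_cst].
Qed.

End Meas.

Set Implicit Arguments.
Unset Strict Implicit.

Section Prob.
Variables (R : realType) (n : nat) (d : measure_display) (T : measurableType d)
  (P : probability T R).

Definition pr (A : set T) : R := fine (P A).

Lemma prE A : measurable A -> P A = (pr A)%:E.
Proof. by move=> mA; rewrite /pr fineK // fin_num_measure. Qed.

Lemma pr_ge0 A : measurable A -> 0 <= pr A.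
Proof. by move=> mA; rewrite -lee_fin -prE. Qed.

Lemma pr_le1 A : measurable A -> pr A <= 1.
Proof. by move=> mA; rewrite -lee_fin -prE // probability_le1. Qed.

Lemma prT : pr setT = 1.
Proof. by rewrite /pr probability_setT. Qed.

Lemma pr_le A B : measurable A -> measurable B -> A `<=` B -> pr A <= pr B.
Proof.
move=> mA mB AB; rewrite -lee_fin -!prE //; apply: le_measure => //; by rewrite inE.
Qed.

Lemma prD A B : measurable A -> measurable B -> pr (A `\` B) = pr A - pr (A `&` B).
Proof.
move=> mA mB; have := @measureD _ _ _ P _ _ mA mB.
have fA : P A \is a fin_num by rewrite fin_num_measure.
have fAB : P (A `&` B) \is a fin_num by rewrite fin_num_measure //; exact: measurableI.
move=> /(_ _) h; rewrite /pr h ?fineB //.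
exact: (le_lt_trans (probability_le1 P mA) (ltry 1)).
Qed.

End Prob.

Section Chain.
Variables (R : realType) (n : nat) (d : measure_display) (T : measurableType d)
  (P : probability T R) (r : 'I_n -> R) (eta rho : R)
  (xs : 'I_n -> nat -> T -> R) (x0 : 'I_n -> R).
Hypothesis (Hmeas : forall i t, measurable_fun setT (xs i t)).
Hypothesis (HA1 : A1 P r eta rho xs x0).
Hypothesis (Hin : in01 x0).

Local Notation X := (traj r xs x0).
Local Notation past t := (<<s past_gen r xs x0 t >>).

Lemma past_mono s t A : (s <= t)%N -> past s A -> past t A.
Proof.
move=> st; apply: sub_sigma_algebra2 => B [i [s' [s's [C [mC ->]]]]].
by exists i, s'; split; [exact: leq_trans st|exists C].
Qed.

Lemma past_I t A B : past t A -> past t B -> past t (A `&` B).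
Proof. exact: (@measurableI _ (g_sigma_algebraType (past_gen r xs x0 t))). Qed.

Lemma past_C t A : past t A -> past t (~` A).
Proof. exact: sigma_algebraC. Qed.

Lemma past_T t : past t setT.
Proof. exact: (@measurableT _ (g_sigma_algebraType (past_gen r xs x0 t))). Qed.

Lemma past_state s t (C : 'I_n -> set R) : (s <= t)%N -> (forall j, measurable (C j)) ->
  past t [set w | forall j, C j (X s w j)].
Proof.
move=> st mC.
apply: (@fin_cap_meas n _ (g_sigma_algebraType (past_gen r xs x0 t))) => j.
apply: sub_sigma_algebra; exists j, s; split => //; exists (C j); split => //.
Qed.

Lemma past_meas t A : past t A -> measurable A.
Proof.
apply: smallest_sub; first exact: sigma_algebra_measurable.
move=> B [i [s [_ [C [mC ->]]]]].
rewrite -[_ @^-1` _]setTI; exact: (@traj_meas R n d T r xs x0 Hmeas s i measurableT _ mC).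
Qed.

Lemma box_meas t (a b : 'I_n -> R) :
  measurable [set w | forall i, a i <= xs i t w <= b i].
Proof.
apply: (@fin_cap_meas n d T (fun i => [set w | a i <= xs i t w <= b i])) => i.
rewrite -[X in measurable X]setTI.
have := Hmeas i t measurableT (measurable_itv `[a i, b i]%R).
by congr measurable; apply/seteqP; split => w /=; rewrite in_itv.
Qed.

Lemma chain t0 L (a b : nat -> 'I_n -> R) (C : nat -> 'I_n -> set R) :
  (forall k i, - eta <= a k i /\ a k i < b k i /\ b k i <= eta) ->
  (forall k i, measurable (C k i)) ->
  (forall x, in01 x -> forall i, C 0%N i (x i)) ->
  (forall k x z, (k < L)%N -> in01 x -> (forall i, C k i (x i)) ->
     (forall i, a k i <= z i <= b k i) -> forall i, C k.+1 i (proj01 (nbr_avg r x i + z i))) ->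
  0 < rho ->
  forall F, past t0 F ->
  (\prod_(k < L) (rho * \prod_(i < n) (b k i - a k i))) * pr P F <=
    pr P (F `&` [set w | forall i, C L i (X (t0 + L) w i)]).
Proof.
move=> hab mC base trans rho0 F pF.
set G := fun k => [set w | forall i, C k i (X (t0 + k) w i)].
have pG k : past (t0 + k) (G k) by apply: past_state.
have mF := past_meas pF.
suff : forall k, (k <= L)%N ->
  (\prod_(l < k) (rho * \prod_(i < n) (b l i - a l i))) * pr P F <= pr P (F `&` G k).
  by apply.
elim => [_|k IH hk].
  rewrite big_ord0 mul1r.
  have -> : F `&` G 0%N = F.
    apply/seteqP; split => [w []//|w Fw]; split => //.
    by rewrite /G /= addn0; apply: base; exact: traj_in01.
  exact: lexx.
have {IH} IH := IH (ltnW hk).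
set v := rho * \prod_(i < n) (b k i - a k i).
have v0 : 0 <= v.
  apply/ltW/mulr_gt0 => //; apply: prodr_gt0 => i _; rewrite subr_gt0.
  by have [_ [h _]] := hab k i.
set B := F `&` G k.
have pB : past (t0 + k) B.
  by apply: past_I; [exact: past_mono (leq_addr _ _) pF|exact: pG].
have mB := past_meas pB.
have hA := HA1 (hab k) pB.
have mbox := box_meas (t0 + k) (a k) (b k).
have mG1 : measurable (F `&` G k.+1) by apply: measurableI => //; exact: past_meas (pG _).
rewrite (prE P mB) (prE P (measurableI _ _ mbox mB)) -EFinM lee_fin in hA.
rewrite big_ord_recr /= mulrAC mulrC.
apply: (le_trans (ler_wpM2l v0 IH)); apply: (le_trans hA).
apply: (pr_le P) => //; first exact: measurableI.
move=> w [hbox [Fw Gw]]; split => //.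
rewrite /G addnS /= => i.
apply: (trans k (X (t0 + k) w) (fun j => xs j (t0 + k) w)) => //; exact: traj_in01.
Qed.

Lemma iterate t0 L (C : 'I_n -> set R) q :
  0 <= q -> (forall j, measurable (C j)) ->
  (forall m F, past (t0 + m * L) F ->
     q * pr P F <= pr P (F `&` [set w | forall i, C i (X (t0 + m * L + L) w i)])) ->
  forall m, pr P [set w | forall k, (k < m)%N -> ~ (forall i, C i (X (t0 + k * L + L) w i))]
    <= (1 - q) ^+ m.
Proof.
move=> q0 mC hq.
set S := fun k => [set w | forall i, C i (X (t0 + k * L + L) w i)].
set Fm := fun m => [set w | forall k, (k < m)%N -> ~ S k w].
have pS k : past (t0 + k.+1 * L) (S k).
  by apply: past_state => //; rewrite mulSnr addnA.
have FS m : Fm m.+1 = Fm m `\` S m.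
  apply/seteqP; split => w /=.
    move=> h; split; last exact: h.
    by move=> k km; apply: h; exact: ltnW.
  move=> [h1 h2] k; rewrite ltnS leq_eqVlt => /orP[/eqP->//|]; exact: h1.
have pF : forall m, past (t0 + m * L) (Fm m).
  elim => [|m IH].
    have -> : Fm 0%N = setT by apply/seteqP; split => // w _ k.
    exact: past_T.
  rewrite FS; apply: past_I.
    by apply: past_mono IH; rewrite leq_add2l leq_mul2r leqnSn orbT.
  by apply: past_C; exact: pS.
have mFm m := past_meas (pF m).
have mS m := past_meas (pS m).
have q1 : q <= 1.
  have := hq 0%N setT (past_T (t:=t0 + 0 * L)); rewrite prT mulr1 => h; apply: le_trans h _.
  by apply: pr_le1; apply: measurableI => //; exact: mS.
elim => [|m IH].
  by rewrite expr0; apply: pr_le1; exact: mFm.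
change (pr P (Fm m.+1) <= (1-q)^+m.+1).
rewrite FS (prD P (mFm m) (mS m)) exprS.
have h := hq m (Fm m) (pF m).
have p0 : 0 <= pr P (Fm m) by exact: pr_ge0.
apply: (le_trans (y := (1 - q) * pr P (Fm m))).
  change (pr P (Fm m) - pr P (Fm m `&` S m) <= (1 - q) * pr P (Fm m)).
  nra.
apply: ler_wpM2l; first lra.
exact: IH.
Qed.

End Chain.

Section Anal.
Variable R : realType.

Lemma geo_to0 (p q : R) : 0 < q <= 1 -> (forall m, p <= (1 - q) ^+ m) -> p <= 0.
Proof.
move=> /andP[q0 q1] hp.
have h : ((1 - q) ^+ m)%R @[m --> \oo] --> (0 : R).
  by apply: cvg_expr; rewrite ger0_norm; lra.
rewrite -(cvg_lim _ h) //; apply: limr_ge; first by apply/cvg_ex; exists 0.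
by apply: nearW => m; exact: hp.
Qed.

Lemma bfun01 (u : nat -> R) : (forall t, 0 <= u t <= 1) -> bounded_fun u.
Proof.
move=> hu; exists 1; split; first exact: num_real.
move=> M M1 t _; have /andP[a b] := hu t.
by rewrite /= ger0_norm //; apply: le_trans b (ltW M1).
Qed.

Lemma limsup_le (u : nat -> R) c t1 : (forall t, 0 <= u t <= 1) ->
  (forall t, (t1 <= t)%N -> u t <= c) -> limn_sup u <= c.
Proof.
move=> hu hc; have bu := bfun01 hu.
rewrite limn_supE //; apply: (le_trans (y := sups u t1)).
  by apply: ge_inf; [exact: bounded_fun_has_lbound_sups|exists t1].
apply: ge_sup; first by exists (u t1); exists t1 => /=.
by move=> _ [k /= kt <-]; exact: hc.
Qed.

Lemma limsup_lt (u : nat -> R) c : (forall t, 0 <= u t <= 1) ->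
  limn_sup u < c -> exists M, forall t, (M <= t)%N -> u t < c.
Proof.
move=> hu; have bu := bfun01 hu.
rewrite limn_supE // => /inf_lt [| _ [M _ <-] hM].
  by exists (sups u 0); exists 0%N.
exists M => t Mt; apply: le_lt_trans hM.
apply: ub_le_sup; last by exists t.
apply: has_ubound_sdrop; exists 1 => _ [k _ <-]; by case/andP: (hu k).
Qed.

End Anal.

Section Scheme.
Variables (R : realType) (n : nat).

Definition aS (K : nat) (eta u e : R) (i0 : 'I_n) (k : nat) (i : 'I_n) : R :=
  if (k < K)%N then - eta else if k == K then u - e else
  (if i == i0 then eta - e else - eta).
Definition bS (K : nat) (eta u e : R) (i0 : 'I_n) (k : nat) (i : 'I_n) : R :=
  if (k < K)%N then - eta / 2 else if k == K then u else
  (if i == i0 then eta else - eta + e).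
Definition CS (K : nat) (eta u e c1 : R) (i0 : 'I_n) (k : nat) (i : 'I_n) : set R :=
  if (k <= K)%N then `]-oo, Num.max 0 (1 - k%:R * eta / 2)] else
  if k == K.+1 then `[u - e, u] else
  (if i == i0 then `[c1, +oo[ else `]-oo, e]).

Lemma max0_cases (c : R) : (0 <= c /\ Num.max 0 c = c) \/ (c < 0 /\ Num.max 0 c = 0).
Proof.
have [h|h] := leP 0 c.
  left; split => //; apply/le_anti; rewrite ge_max h lexx /= le_max lexx orbT //.
right; split => //; apply/le_anti; rewrite ge_max lexx (ltW h) /= le_max lexx //.
Qed.

Variables (K : nat) (eta u e c1 : R) (i0 : 'I_n) (r : 'I_n -> R).
Hypotheses (eta0 : 0 < eta) (K1 : 1 < K%:R * eta / 2) (u0 : 0 < u) (ueta : u <= eta)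
  (u1 : u <= 1) (e0 : 0 < e) (eu : e <= u) (c11 : c1 <= 1) (c1u : c1 <= 2 * u - 2 * e)
  (r0 : forall i, 0 <= r i).

Local Ltac getH := have h_1 := eta0; have h_2 := K1; have h_3 := u0; have h_4 := ueta;
  have h_5 := u1; have h_6 := e0; have h_7 := eu; have h_8 := c11; have h_9 := c1u.

Lemma scheme_box k i : - eta <= aS K eta u e i0 k i /\ aS K eta u e i0 k i < bS K eta u e i0 k i
   /\ bS K eta u e i0 k i <= eta.
Proof.
getH; rewrite /aS /bS; case: ifP => _; first (split; [|split]; lra).
case: ifP => _; first (split; [|split]; lra).
case: ifP => _; split; [|split| |split]; lra.
Qed.

Lemma scheme_meas k i : measurable (CS K eta u e c1 i0 k i).
Proof.
rewrite /CS; case: ifP => _; first exact: measurable_itv.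
case: ifP => _; first exact: measurable_itv.
case: ifP => _; exact: measurable_itv.
Qed.

Lemma scheme_base x : in01 x -> forall i, CS K eta u e c1 i0 0 i (x i).
Proof.
getH; move=> hx i; rewrite /CS leq0n /= in_itv /= mul0r mul0r subr0.
have /andP[_ h] := hx i; rewrite le_max h orbT //.
Qed.

Lemma scheme_trans k x z : (k < K.+2)%N -> in01 x -> (forall i, CS K eta u e c1 i0 k i (x i)) ->
  (forall i, aS K eta u e i0 k i <= z i <= bS K eta u e i0 k i) ->
  forall i, CS K eta u e c1 i0 k.+1 i (proj01 (nbr_avg r x i + z i)).
Proof.
getH; move=> kL hx hC hz i.
have x01 j : 0 <= x j <= 1 := hx j.
have [kK|Kk|kK] := ltngtP k K.
-
  have k1 : (k <= K)%N by exact: ltnW.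
  have hC' j : x j <= Num.max 0 (1 - k%:R * eta / 2).
    by have := hC j; rewrite /CS k1 /= in_itv.
  have hz' : - eta <= z i <= - eta / 2 by have := hz i; rewrite /aS /bS kK.
  rewrite /CS kK /= in_itv /=.
  have hC2 j : 0 <= x j <= Num.max 0 (1 - k%:R * eta / 2).
    by rewrite hC' andbT; case/andP: (x01 j).
  have hav := @avg_bounds R n r x i 0 (Num.max 0 (1 - k%:R * eta / 2)) (r0 i) hC2.
  move: hav => /andP[hav0 hav1].
  have kS : (k.+1)%:R = k%:R + 1 :> R by rewrite -addn1 natrD.
  rewrite kS.
  case: (max0_cases (1 - k%:R * eta / 2)) => [[c0 cE]|[c0 cE]];
  case: (max0_cases (1 - (k%:R + 1) * eta / 2)) => [[c0' cE']|[c0' cE']];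
  rewrite cE' ?cE in hav1 *; apply: proj01_le; move: hz' => /andP[z1 z2]; try lra.
-
  have kE : k = K.+1 by lia.
  subst k.
  have nK : (K.+1 <= K)%N = false by lia.
  have nK2 : (K.+2 <= K)%N = false by lia.
  have hC' j : u - e <= x j <= u.
    by have := hC j; rewrite /CS nK eqxx /= in_itv.
  have hav := @avg_bounds R n r x i (u - e) u (r0 i) hC'.
  move: hav => /andP[hav0 hav1].
  have hz' := hz i; rewrite /aS /bS ltnNge leqnSn /= (gtn_eqF (ltnSn K)) in hz'.
  rewrite /CS nK2 (gtn_eqF (ltnSn K.+1)).
  case: eqP hz' => [_|_] /andP[z1 z2] /=; rewrite in_itv /=.
    rewrite andbT; apply: proj01_ge => //; lra.
  apply: proj01_le; lra.
-
  subst k.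
  have nK : (K.+1 <= K)%N = false by lia.
  have hC' j : x j <= 0.
    have := hC j; rewrite /CS leqnn /= in_itv /=.
    case: (max0_cases (1 - K%:R * eta / 2)) => [[c0 cE]|[c0 cE]]; rewrite cE //; lra.
  have hC2 j : 0 <= x j <= 0 by rewrite hC' andbT; case/andP: (x01 j).
  have hav := @avg_bounds R n r x i 0 0 (r0 i) hC2.
  move: hav => /andP[hav0 hav1].
  have hz' := hz i; rewrite /aS /bS ltnn eqxx in hz'; move: hz' => /andP[z1 z2].
  rewrite /CS nK eqxx /= in_itv /=; apply/andP; split.
    apply: proj01_ge; lra.
  apply: proj01_le; lra.
Qed.

End Scheme.

Section Bound.
Variables (R : realType) (n : nat) (d : measure_display) (T : measurableType d)
  (P : probability T R) (r : 'I_n -> R) (eta rho : R)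
  (xs : 'I_n -> nat -> T -> R) (x0 : 'I_n -> R).

Definition qS (L K : nat) (u e : R) (i0 : 'I_n) : R :=
  \prod_(k < L) (rho * \prod_(i < n) (bS K eta u e i0 k i - aS K eta u e i0 k i)).

Lemma qS_pos L K u e c1 i0 : 0 < eta -> 0 < rho -> 1 < K%:R * eta / 2 -> 0 < u -> u <= eta ->
  u <= 1 -> 0 < e -> e <= u -> c1 <= 1 -> c1 <= 2 * u - 2 * e -> 0 < qS L K u e i0.
Proof.
move=> h1 h2 h3 h4 h5 h6 h7 h8 h9 h10; apply: prodr_gt0 => k _; apply: mulr_gt0 => //.
apply: prodr_gt0 => i _; rewrite subr_gt0.
by have [_ [h _]] := scheme_box i0 h1 h3 h4 h5 h6 h7 h8 h9 h10 k i.
Qed.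

Lemma scheme_bound L K u e c1 i0 t0 q :
  (forall i t, measurable_fun setT (xs i t)) -> A1 P r eta rho xs x0 -> in01 x0 ->
  (forall i, 0 <= r i) ->
  0 < eta -> 0 < rho -> 1 < K%:R * eta / 2 -> 0 < u -> u <= eta ->
  u <= 1 -> 0 < e -> e <= u -> c1 <= 1 -> c1 <= 2 * u - 2 * e -> (L <= K.+2)%N ->
  0 <= q -> q <= qS L K u e i0 ->
  forall m, pr P [set w | forall k, (k < m)%N ->
     ~ (forall i, CS K eta u e c1 i0 L i (traj r xs x0 (t0 + k * L + L) w i))]
    <= (1 - q) ^+ m.
Proof.
move=> Hm HA Hin r0 h1 h2 h3 h4 h5 h6 h7 h8 h9 h10 hL q0 qq.
apply: (iterate Hm) => //.
- by move=> j; apply: scheme_meas.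
- move=> m F pF; apply: le_trans (ler_wpM2r (pr_ge0 P (past_meas Hm pF)) qq) _.
  apply: (chain Hm HA Hin) => //.
  + exact: (scheme_box i0 h1 h3 h4 h5 h6 h7 h8 h9 h10).
  + by move=> k i; apply: scheme_meas.
  + exact: (scheme_base i0 h1 h3 h4 h5 h6 h7 h8 h9 h10).
  + move=> k x z kL; apply: (scheme_trans h1 h3 h4 h5 h6 h7 h8 h9 h10 r0).
    exact: leq_trans kL hL.
Qed.

End Bound.

Section Misc.
Variables (R : realType) (n : nat).

Lemma bigmax_seq_ge0 (I : eqType) (s : seq I) (F : I -> R) (x0 : R) :
  x0 <= \big[Order.max/x0]_(j <- s) F j.
Proof. by elim: s => [|a s IH]; rewrite ?big_nil ?big_cons ?lexx // le_max IH orbT. Qed.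

Lemma diam_ge0 (x : 'I_n -> R) : 0 <= diam x.
Proof. exact: bigmax_seq_ge0. Qed.

Lemma diam_le1 (x : 'I_n -> R) : in01 x -> diam x <= 1.
Proof.
move=> hx; apply: diam_le => // i j.
have /andP[a b] := hx i; have /andP[c e] := hx j.
by rewrite ler_norml; apply/andP; split; lra.
Qed.

Lemma rmin_ge0 (r : 'I_n -> R) : (forall i, 0 <= r i) -> 0 <= rmin r.
Proof.
move=> r0; rewrite /rmin; elim: (index_enum _) => [|a s IH].
  by rewrite big_nil.
by rewrite big_cons le_min r0 IH.
Qed.

Lemma diam_meas d (T : measurableType d) (f : 'I_n -> T -> R) :
  (forall i, measurable_fun setT (f i)) ->
  measurable_fun setT (fun w => diam (fun i => f i w)).
Proof.
move=> mf.
have gen : forall (I : eqType) (s : seq I) (G : I -> T -> R), (forall j, measurable_fun setT (G j)) ->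
    measurable_fun setT (fun w => \big[Order.max/0]_(j <- s) G j w).
  move=> I s G mG; elim: s => [|a s IH].
    by rewrite (_ : (fun w => _) = cst 0); [exact: measurable_cst|apply/funext => w; rewrite big_nil].
  rewrite (_ : (fun w => _) = (G a) \max (fun w => \big[Order.max/0]_(j <- s) G j w)).
    exact: measurable_maxr.
  by apply/funext => w; rewrite big_cons.
rewrite /diam; apply: (gen _ _ (fun i w => \big[Order.max/0]_(j < n) `|f i w - f j w|)) => i.
apply: (gen _ _ (fun j w => `|f i w - f j w|)) => j.
apply: (@measurableT_comp _ _ _ _ _ _ (@Num.norm _ R) setT (fun w => f i w - f j w)); first exact: normr_measurable.
exact: measurable_funB.
Qed.

Definition Kp (eta : R) : nat := (Num.truncn (2 / eta)).+1.

Lemma Kp_prop (eta : R) : 0 < eta -> 1 < (Kp eta)%:R * eta / 2.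
Proof.
move=> e0; have h := truncnS_gt (2 / eta).
rewrite ltr_pdivrMr // in h.
rewrite /Kp; lra.
Qed.

End Misc.

Section Final.
Variables (R : realType) (n : nat).

Lemma CS_K_le0 K (eta u e c1 : R) (i0 i : 'I_n) y :
  1 < K%:R * eta / 2 -> CS K eta u e c1 i0 K i y -> y <= 0.
Proof.
move=> hK; rewrite /CS leqnn /= in_itv /=.
case: (max0_cases (1 - K%:R * eta / 2)) => [[c0 cE]|[c0 cE]]; rewrite cE //; lra.
Qed.

Lemma CS_K2 K (eta u e c1 : R) (i0 i : 'I_n) y :
  CS K eta u e c1 i0 K.+2 i y -> if i == i0 then c1 <= y else y <= e.
Proof.
have nK2 : (K.+2 <= K)%N = false by lia.
rewrite /CS nK2 (gtn_eqF (ltnSn K.+1)).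
by case: eqP => _ /=; rewrite in_itv /= ?andbT.
Qed.

Lemma Fm_meas d (T : measurableType d) r (xs : 'I_n -> nat -> T -> R) x0
  (C : 'I_n -> set R) (t : nat -> nat) m :
  (forall i t, measurable_fun setT (xs i t)) -> (forall i, measurable (C i)) ->
  measurable [set w | forall k, (k < m)%N -> ~ (forall i, C i (traj r xs x0 (t k) w i))].
Proof.
move=> Hm mC.
have mS k : measurable [set w | forall i, C i (traj r xs x0 (t k) w i)].
  apply: (@fin_cap_meas n d T (fun i => [set w | C i (traj r xs x0 (t k) w i)])) => i.
  rewrite -[X in measurable X]setTI; exact: (@traj_meas R n d T r xs x0 Hm (t k) i).
have -> : [set w | forall k, (k < m)%N -> ~ (forall i, C i (traj r xs x0 (t k) w i))] =
   \bigcap_(k in [set k | (k < m)%N]) ~` [set w | forall i, C i (traj r xs x0 (t k) w i)].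
  by apply/seteqP; split => w /= h k km; apply: h.
apply: bigcap_measurableType => k _; exact: measurableC.
Qed.

Lemma invariance {T : Type} r (xs : 'I_n -> nat -> T -> R) x0 (eta : R) w tau :
  0 <= eta -> 2 * eta <= rmin r -> (forall i t, - eta <= xs i t w <= eta) ->
  diam (traj r xs x0 tau w) <= 2 * eta ->
  forall t, (tau <= t)%N -> diam (traj r xs x0 t w) <= 2 * eta.
Proof.
move=> e0 er hb h t /subnK <-; elim: (t - tau)%N => [//|k IH].
rewrite addSn /=; apply: step_diam => // i; exact: hb.
Qed.

End Final.

Section Parts.
Variables (R : realType) (n : nat).

Lemma meas_pre d (T : measurableType d) (g : T -> R) (Y : set R) :
  measurable_fun setT g -> measurable Y -> measurable (g @^-1` Y).
Proof. by move=> mg mY; rewrite -[X in measurable X]setTI; exact: mg. Qed.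

Lemma part2b (r : 'I_n -> R) (eta rho : R) :
  (3 <= n)%N -> (forall i, 0 <= r i) -> 0 < eta -> 0 < rho ->
    exists lam Lam : R, 0 < lam < 1 /\ 0 < Lam /\
      forall d (T : measurableType d) (P : probability T R)
          (xi : ('I_n -> R) -> 'I_n -> nat -> T -> R),
        noise_ok P r eta rho xi ->
        forall x0, in01 x0 -> forall s : R, 0 <= s ->
          (P [set w | forall t : nat, (t%:R <= s ->
                        2 * eta < diam (traj r (xi x0) x0 t w))%R]
            <= ((1 - lam) ^ (Num.floor (s / Lam)))%:E)%E.
Proof.
move=> hn r0 e0 rho0.
have n0 : (0 < n)%N by lia.
pose i0 := Ordinal n0.
pose K := Kp eta.
have hK : 1 < K%:R * eta / 2 := Kp_prop e0.
pose u := Num.min eta 1.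
have u0 : 0 < u by rewrite lt_min e0 ltr01.
have ue : u <= eta by rewrite ge_min lexx.
have u1 : u <= 1 by rewrite ge_min lexx orbT.
pose e := u / 4.
have e0' : 0 < e by rewrite /e; lra.
have eu : e <= u by rewrite /e; lra.
have c11 : (0 : R) <= 1 by [].
have c1u : (0 : R) <= 2 * u - 2 * e by rewrite /e; lra.
pose q := qS eta rho K K u e i0.
have q0 : 0 < q := qS_pos K i0 e0 rho0 hK u0 ue u1 e0' eu c11 c1u.
exists (Num.min q (1/2)), K%:R.
split; first by apply/andP; split; [rewrite lt_min q0 /=; lra|rewrite gt_min; apply/orP; right; lra].
split; first by rewrite ltr0n.
move=> d T P xi nok x0 hx0 s s0.
have [Hm [Hb HA]] := nok x0 hx0.
set lam := Num.min q (1/2).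
have lam0 : 0 <= lam by apply/ltW; rewrite lt_min q0 /=; lra.
have lamq : lam <= q by rewrite ge_min lexx.
have Kpos : 0 < (K%:R : R) by rewrite ltr0n.
set A := [set w | _].
set m := `|Num.floor (s / K%:R)|%N.
have fE : Num.floor (s / K%:R) = m%:Z.
  by rewrite /m gez0_abs // floor_ge0 divr_ge0 // ltW.
have mK : (m * K)%:R <= s.
  have h := floor_le (s / K%:R); rewrite fE in h.
  have h' : m%:R <= s / K%:R := h.
  by rewrite natrM -ler_pdivlMr.
have FmB := @scheme_bound R n d T P r eta rho (xi x0) x0 K K u e 0 i0 0%N lam Hm HA hx0 r0
   e0 rho0 hK u0 ue u1 e0' eu c11 c1u (leq_trans (leqnSn K) (leqnSn K.+1)) lam0 lamq m.
set Fm := [set w | _] in FmB.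
have mFm : measurable Fm.
  apply: (Fm_meas r x0 (fun k => 0 + k * K + K)%N m Hm) => i; exact: scheme_meas.
have mA : measurable A.
  have -> : A = \bigcap_t [set w | (t%:R <= s -> 2 * eta < diam (traj r (xi x0) x0 t w))%R].
    by apply/seteqP; split => w /= h t => [_|]; apply: h.
  apply: bigcapT_measurable => t.
  have [ts|ts] := boolP (t%:R <= s).
    have -> : [set w | true -> (2 * eta < diam (traj r (xi x0) x0 t w))%R] =
       (fun w => diam (traj r (xi x0) x0 t w)) @^-1` `]2 * eta, +oo[.
      apply/seteqP; split => w /=; rewrite in_itv /= andbT; first by move=> h; exact: h.
      by move=> h _.
    apply: meas_pre; last exact: measurable_itv.
    have h := diam_meas (@traj_meas R n d T r (xi x0) x0 Hm t). exact: h.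
  have -> : [set w | false -> (2 * eta < diam (traj r (xi x0) x0 t w))%R] = setT.
    by apply/seteqP; split => w // _ h.
  exact: measurableT.
have AF : A `<=` Fm.
  move=> w Aw k km Sk.
  set t := (0 + k * K + K)%N in Sk.
  have hx := @traj_in01 R n T r (xi x0) x0 t w hx0.
  have xle i : traj r (xi x0) x0 t w i <= 0 := CS_K_le0 hK (Sk i).
  have d0 : diam (traj r (xi x0) x0 t w) <= 0.
    apply: diam_le => // i j; have /andP[a b] := hx i; have /andP[c f] := hx j.
    have := xle i; have := xle j; move=> g1 g2.
    by rewrite ler_norml; apply/andP; split; lra.
  have tm : (t <= m * K)%N by rewrite /t add0n -mulSnr leq_mul2r km orbT.
  have ts : t%:R <= s by apply: le_trans mK; rewrite ler_nat.
  have := Aw t ts; lra.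
rewrite fE -exprnP (prE P mA) lee_fin.
exact: le_trans (pr_le P mA mFm AF) FmB.
Qed.

Lemma all0_diam (x : 'I_n -> R) : in01 x -> (forall i, x i <= 0) -> diam x <= 0.
Proof.
move=> hx xle; apply: diam_le => // i j; have /andP[a b] := hx i; have /andP[c f] := hx j.
have := xle i; have := xle j; move=> g1 g2.
by rewrite ler_norml; apply/andP; split; lra.
Qed.

Lemma part1_if (r : 'I_n -> R) (eta rho : R) :
  (3 <= n)%N -> (forall i, 0 <= r i) -> 0 < eta -> 0 < rho -> eta <= rmin r / 2 ->
  forall d (T : measurableType d) (P : probability T R)
      (xi : ('I_n -> R) -> 'I_n -> nat -> T -> R),
     noise_ok P r eta rho xi ->
     forall x0, in01 x0 ->
       {ae P, forall w, quasi_sync r (fun t => traj r (xi x0) x0 t w)}.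
Proof.
move=> hn r0 e0 rho0 er d T P xi nok x0 hx0.
have [Hm [Hb HA]] := nok x0 hx0.
have n0 : (0 < n)%N by lia.
pose i0 := Ordinal n0.
pose K := Kp eta.
have hK : 1 < K%:R * eta / 2 := Kp_prop e0.
pose u := Num.min eta 1.
have u0 : 0 < u by rewrite lt_min e0 ltr01.
have ue : u <= eta by rewrite ge_min lexx.
have u1 : u <= 1 by rewrite ge_min lexx orbT.
pose e := u / 4.
have e0' : 0 < e by rewrite /e; lra.
have eu : e <= u by rewrite /e; lra.
have c11 : (0 : R) <= 1 by [].
have c1u : (0 : R) <= 2 * u - 2 * e by rewrite /e; lra.
pose q := qS eta rho K K u e i0.
have q0 : 0 < q := qS_pos K i0 e0 rho0 hK u0 ue u1 e0' eu c11 c1u.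
set lam := Num.min q (1/2).
have lam0 : 0 < lam by rewrite lt_min q0 /=; lra.
have lam1 : lam <= 1 by rewrite ge_min; apply/orP; right; lra.
have lamq : lam <= q by rewrite ge_min lexx.
pose Fm := fun m => [set w | forall k, (k < m)%N ->
     ~ (forall i, CS K eta u e 0 i0 K i (traj r (xi x0) x0 (0 + k * K + K) w i))].
have FmB m : pr P (Fm m) <= (1 - lam) ^+ m.
  exact: (@scheme_bound R n d T P r eta rho (xi x0) x0 K K u e 0 i0 0%N lam Hm HA hx0 r0
   e0 rho0 hK u0 ue u1 e0' eu c11 c1u (leq_trans (leqnSn K) (leqnSn K.+1)) (ltW lam0) lamq m).
have mFm m : measurable (Fm m).
  apply: (Fm_meas r x0 (fun k => 0 + k * K + K)%N m Hm) => i; exact: scheme_meas.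
pose N := \bigcap_m Fm m.
have mN : measurable N by apply: bigcapT_measurable.
exists N; split => //.
  have pN : pr P N <= 0.
    apply: (geo_to0 (q := lam)); first by rewrite lam0 lam1.
    move=> m; apply: le_trans (FmB m); apply: pr_le => //.
    by move=> w Nw; exact: Nw.
  by rewrite (prE P mN); apply/eqP; rewrite eqe; apply/eqP/le_anti; rewrite pN pr_ge0.
move=> w /= nqs m _ k km Sk; apply: nqs.
set t1 := (0 + k * K + K)%N in Sk.
have hx := @traj_in01 R n T r (xi x0) x0 t1 w hx0.
have d0 : diam (traj r (xi x0) x0 t1 w) <= 2 * eta.
  apply: le_trans (all0_diam hx (fun i => CS_K_le0 hK (Sk i))) _; lra.
have er2 : 2 * eta <= rmin r by lra.
have inv := invariance (ltW e0) er2 (fun i t => Hb i t w) d0.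
rewrite /quasi_sync; apply: le_trans (_ : _ <= 2 * eta) _.
  apply: (limsup_le (t1 := t1)) => [t|t tt]; last exact: inv.
  by rewrite diam_ge0 diam_le1 //; exact: traj_in01.
lra.
Qed.

Lemma part1_onlyif (r : 'I_n -> R) (eta rho : R) :
  (3 <= n)%N -> (forall i, 0 <= r i) -> 0 < eta -> 0 < rho -> rmin r < 1 ->
  forall d (T : measurableType d) (P : probability T R)
      (xi : ('I_n -> R) -> 'I_n -> nat -> T -> R),
     noise_ok P r eta rho xi ->
     forall x0, in01 x0 ->
       {ae P, forall w, quasi_sync r (fun t => traj r (xi x0) x0 t w)} ->
       eta <= rmin r / 2.
Proof.
move=> hn r0 e0 rho0 rm1 d T P xi nok x0 hx0 ae.
rewrite leNgt; apply/negP => hlt.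
have [Hm [Hb HA]] := nok x0 hx0.
have n0 : (0 < n)%N by lia.
have n1 : (1 < n)%N by lia.
pose i0 := Ordinal n0.
pose i1 := Ordinal n1.
have i10 : (i1 == i0) = false by [].
pose K := Kp eta.
have hK : 1 < K%:R * eta / 2 := Kp_prop e0.
pose u := Num.min eta 1.
have u0 : 0 < u by rewrite lt_min e0 ltr01.
have ue : u <= eta by rewrite ge_min lexx.
have u1 : u <= 1 by rewrite ge_min lexx orbT.
have rm0 : 0 <= rmin r := rmin_ge0 r0.
have hu : rmin r / 2 < u by rewrite lt_min hlt /=; lra.
pose g := Num.min 1 (2 * u) - rmin r.
have m1 : Num.min 1 (2 * u) <= 1 by rewrite ge_min lexx.
have m2 : Num.min 1 (2 * u) <= 2 * u by rewrite ge_min lexx orbT.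
have g0 : 0 < g by rewrite /g subr_gt0 lt_min rm1 /=; lra.
have g2u : g <= 2 * u by rewrite /g; lra.
pose e := g / 8.
have e0' : 0 < e by rewrite /e; lra.
have eu : e <= u by rewrite /e; lra.
pose c1 := Num.min 1 (2 * u - 2 * e).
have c11 : c1 <= 1 by rewrite ge_min lexx.
have c1u : c1 <= 2 * u - 2 * e by rewrite ge_min lexx orbT.
have c1g : Num.min 1 (2 * u) - 2 * e <= c1 by rewrite le_min; apply/andP; split; lra.
pose L := K.+2.
pose q := qS eta rho L K u e i0.
have q0 : 0 < q := qS_pos L i0 e0 rho0 hK u0 ue u1 e0' eu c11 c1u.
set lam := Num.min q (1/2).
have lam0 : 0 < lam by rewrite lt_min q0 /=; lra.
have lam1 : lam <= 1 by rewrite ge_min; apply/orP; right; lra.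
have lamq : lam <= q by rewrite ge_min lexx.
pose Fm := fun M m => [set w | forall k, (k < m)%N ->
     ~ (forall i, CS K eta u e c1 i0 L i (traj r (xi x0) x0 (M + k * L + L) w i))].
have FmB M m : pr P (Fm M m) <= (1 - lam) ^+ m.
  exact: (@scheme_bound R n d T P r eta rho (xi x0) x0 L K u e c1 i0 M lam Hm HA hx0 r0
   e0 rho0 hK u0 ue u1 e0' eu c11 c1u (leqnn _) (ltW lam0) lamq m).
have mFm M m : measurable (Fm M m).
  apply: (Fm_meas r x0 (fun k => M + k * L + L)%N m Hm) => i; exact: scheme_meas.
pose Z := fun M => \bigcap_m Fm M m.
have mZ M : measurable (Z M) by apply: bigcapT_measurable.
have PZ M : P (Z M) = 0%E.
  have pN : pr P (Z M) <= 0.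
    apply: (geo_to0 (q := lam)); first by rewrite lam0 lam1.
    move=> m; apply: le_trans (FmB M m); apply: pr_le => //.
    by move=> w Nw; exact: Nw.
  by rewrite (prE P (mZ M)); apply/eqP; rewrite eqe; apply/eqP/le_anti; rewrite pN pr_ge0.
move: ae => [N [mN PN0 sN]].
have cover : setT `<=` N `|` \bigcup_M Z M.
  move=> w _; have [qsw|nqs] := pselect (quasi_sync r (fun t => traj r (xi x0) x0 t w)); last first.
    by left; apply: sN.
  right.
  have lt : limn_sup (fun t => diam (traj r (xi x0) x0 t w)) < rmin r + g / 2.
    by apply: le_lt_trans qsw _; lra.
  have [|M hM] := limsup_lt _ lt.
    by move=> t; rewrite diam_ge0 diam_le1 //; exact: traj_in01.
  exists M => //; move=> m _ k km Sk.
  set t := (M + k * L + L)%N in Sk.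
  have a0 := CS_K2 (Sk i0); rewrite eqxx in a0.
  have a1 := CS_K2 (Sk i1); rewrite i10 in a1.
  have dge := @diam_ge R n (traj r (xi x0) x0 t w) i0 i1.
  have tM : (M <= t)%N by rewrite /t -addnA leq_addr.
  have hd := hM t tM.
  have hn1 := ler_norm (traj r (xi x0) x0 t w i0 - traj r (xi x0) x0 t w i1).
  have eE : e = g / 8 := erefl. have gE : g = Num.min 1 (2 * u) - rmin r := erefl.
  lra.
have negT : P.-negligible setT.
  apply: (@negligibleS _ _ _ P _ _ cover); apply: negligibleU; first by exists N; split.
  by apply: negligible_bigcup => M; exists (Z M); split; [exact: mZ|exact: PZ|].
have h := measure_negligible measurableT negT; have h2 : P setT = 0%E := h.
by rewrite probability_setT in h2; case: h2 => h3; lra.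
Qed.

End Parts.

Unset Implicit Arguments.

Theorem corollary1 (R : realType) (n : nat) (r : 'I_n -> R) (eta rho : R) :
  (3 <= n)%N -> (forall i, 0 < r i <= 1) -> 0 < eta -> 0 < rho -> rmin r < 1 ->
  (forall d (T : measurableType d) (P : probability T R)
      (xi : ('I_n -> R) -> 'I_n -> nat -> T -> R),
     noise_ok P r eta rho xi ->
     forall x0, in01 x0 ->
       ({ae P, forall w, quasi_sync r (fun t => traj r (xi x0) x0 t w)}
         <-> eta <= rmin r / 2))
  /\
  (eta <= rmin r / 2 ->
    (forall d (T : measurableType d) (P : probability T R)
        (xi : ('I_n -> R) -> 'I_n -> nat -> T -> R),
       noise_ok P r eta rho xi ->
       forall x0, in01 x0 -> forall (w : T) (tau : nat),
         diam (traj r (xi x0) x0 tau w) <= 2 * eta ->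
         (forall t, (t < tau)%N -> 2 * eta < diam (traj r (xi x0) x0 t w)) ->
         forall t, (tau <= t)%N -> diam (traj r (xi x0) x0 t w) <= 2 * eta)
    /\
    exists lam Lam : R, 0 < lam < 1 /\ 0 < Lam /\
      forall d (T : measurableType d) (P : probability T R)
          (xi : ('I_n -> R) -> 'I_n -> nat -> T -> R),
        noise_ok P r eta rho xi ->
        forall x0, in01 x0 -> forall s : R, 0 <= s ->
          (P [set w | forall t : nat, (t%:R <= s ->
                        2 * eta < diam (traj r (xi x0) x0 t w))%R]
            <= ((1 - lam) ^ (Num.floor (s / Lam)))%:E)%E).
Proof.
move=> hn hr he hrho hrm.
have r0 : forall i, 0 <= r i by move=> i; case/andP: (hr i) => /ltW.
split.
  move=> d T P xi nok x0 hx0; split.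
    exact: (part1_onlyif hn r0 he hrho hrm nok hx0).
  move=> er; exact: (part1_if hn r0 he hrho er nok hx0).
move=> er; split.
  move=> d T P xi nok x0 hx0 w tau hd _ t ht.
  have [_ [Hb _]] := nok x0 hx0.
  have er2 : 2 * eta <= rmin r by lra.
  exact: (invariance (ltW he) er2 (fun i t => Hb i t w) hd ht).
exact: (part2b hn r0 he hrho).
Qed.
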